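(* Let $(B,\mathcal{H})$ be a covering of the point $k$, i.e. $\mathcal{H}=(\mathcal{H}_L,\mathcal{H}_R,S)$ is a finitely generated projective Hopf algebroid over $k$ with bijective antipode, and $k\subseteq B$ is a right $\mathcal{H}$-Galois extension with $B$ finitely generated projective over $k$. Then $\mathcal{H}_L$ and $\mathcal{H}_R$ are Hopf algebras over $k$ (i.e. their underlying bialgebroids are $k$-bialgebras admitting antipodes $S_L,S_R$), and they are coupled Hopf algebras with coupling map $S$. In particular $\mathcal{H}$ is the Hopf algebroid associated with a pair of coupled Hopf algebras.
   Context: $k$ is a commutative unital ring. A Hopf algebroid over $R$ is a triple $(\mathcal{H}_L,\mathcal{H}_R,S)$ of a left $R^{op}$-bialgebroid $(H,s_L,t_L,\Delta_L,\epsilon_L)$ and a right $R$-bialgebroid $(H,s_R,t_R,\Delta_R,\epsilon_R)$ on the same $k$-algebra $H$ together with a bijective antipode $S$, satisfying the standard compatibility conditions (compatible sources/targets/counits, commuting coproducts $(\Delta_L\otimes\mathrm{id})\Delta_R=(\mathrm{id}\otimes\Delta_R)\Delta_L$ etc., $S(t_L(l)ht_R(r))=s_R(r)S(h)s_L(l)$, $\mu_L(S\otimes\mathrm{id})\Delta_L=s_R\epsilon_R$, $\mu_R(\mathrm{id}\otimes S)\Delta_R=s_L\epsilon_L$). An extension $A\subseteq B$ is right $\mathcal{H}$-Galois if $B$ is a right $\mathcal{H}$-comodule algebra (compatible coactions of both bialgebroids) with coinvariants $A$ and bijective Galois map $B\otimes_AB\to B\otimes_R H$, $a\otimes b\mapsto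 ab^{[0]}\otimes b^{[1]}$. Coupled Hopf algebras: two Hopf algebra structures $H_1=(H,m_1,\eta_1,\Delta_1,\epsilon_1,S_1)$ and $H_2=(H,m_2,\eta_2,\Delta_2,\epsilon_2,S_2)$ on the same $k$-module $H$ are coupled if there is a $k$-linear map $C:H\to H$ (the coupling map) with $m_1(C\otimes\mathrm{id})\Delta_1=\eta\epsilon_2$ and $m_2(\mathrm{id}\otimes C)\Delta_2=\eta\epsilon_1$, and the coproducts $\Delta_1,\Delta_2$ commute ($(\Delta_1\otimes\mathrm{id})\Delta_2=(\mathrm{id}\otimes\Delta_2)\Delta_1$ and $(\Delta_2\otimes\mathrm{id})\Delta_1=(\mathrm{id}\otimes\Delta_1)\Delta_2$). Such a pair defines a Hopf algebroid over $k$ with left bialgebroid $H_1$, right bialgebroid $H_2$ and antipode $C$. *)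

(* Defs.v *)
From HB Require Import structures.
From mathcomp Require Import all_boot all_order all_algebra.
Set Implicit Arguments. Unset Strict Implicit. Unset Printing Implicit Defensive.
Import GRing.Theory.
Local Open Scope ring_scope.

(* An element of M (x)_k N is represented by a formal finite sum            *)
(* sum_i m_i (x) n_i, i.e. a list of pairs.  Two formal sums denote the     *)
(* same tensor iff they have the same image under every k-bilinear map out  *)
(* of M x N (universal property of the tensor product).  A map into a       *)
(* tensor product is represented by a function choosing representatives.    *)
Section Tensor.
Variable k : comPzRingType.

Definition tens (M N : Type) := seq (M * N).
Definition tens3 (M N P : Type) := seq (M * N * P).

Definition is_linear (M N : lmodType k) (f : M -> N) :=
  forall (a : k) (x y : M), f (a *: x + y) = a *: f x + f y.

Definition is_klinear (M : lmodType k) (f : M -> k) :=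
  forall (a : k) (x y : M), f (a *: x + y) = a * f x + f y.

Definition bilinear_map (M N P : lmodType k) (f : M -> N -> P) :=
  (forall n, is_linear (fun m => f m n)) /\ (forall m, is_linear (f m)).

Definition trilinear_map (M N P Q : lmodType k) (f : M -> N -> P -> Q) :=
  [/\ forall n p, is_linear (fun m => f m n p),
      forall m p, is_linear (fun n => f m n p) &
      forall m n, is_linear (f m n)].

Definition tapp (M N P : lmodType k) (f : M -> N -> P) (t : tens M N) : P :=
  \sum_(p <- t) f p.1 p.2.
Definition tapp3 (M N P Q : lmodType k) (f : M -> N -> P -> Q)
  (t : tens3 M N P) : Q := \sum_(p <- t) f p.1.1 p.1.2 p.2.

Definition teq (M N : lmodType k) (t u : tens M N) : Prop :=
  forall (Q : lmodType k) (f : M -> N -> Q), bilinear_map f -> tapp f t = tapp f u.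
Definition teq3 (M N P : lmodType k) (t u : tens3 M N P) : Prop :=
  forall (Q : lmodType k) (f : M -> N -> P -> Q), trilinear_map f ->
    tapp3 f t = tapp3 f u.

(* k-module operations on formal sums: a * t, t + u is concatenation *)
Definition tscale (M N : lmodType k) (a : k) (t : tens M N) : tens M N :=
  [seq (a *: p.1, p.2) | p <- t].

Definition tlinear (M N P : lmodType k) (d : M -> tens N P) :=
  forall (a : k) (x y : M), teq (d (a *: x + y)) (tscale a (d x) ++ d y).

(* (d (x) id) t and (id (x) d) t *)
Definition tmap_l (M N M1 M2 : Type) (d : M -> tens M1 M2) (t : tens M N)
  : tens3 M1 M2 N := flatten [seq [seq (q.1, q.2, p.2) | q <- d p.1] | p <- t].
Definition tmap_r (M N N1 N2 : Type) (d : N -> tens N1 N2) (t : tens M N)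
  : tens3 M N1 N2 := flatten [seq [seq (p.1, q.1, q.2) | q <- d p.2] | p <- t].

Definition tmul (A C : pzRingType) (t : tens A C) (u : tens A C) : tens A C :=
  [seq (p.1 * q.1, p.2 * q.2) | p <- t, q <- u].

End Tensor.

Section Algebraic.
Variable k : comPzRingType.

Definition eta (H : algType k) (r : k) : H := r *: 1.

Definition fg_projective (M : lmodType k) :=
  exists (n : nat) (i : M -> 'rV[k]_n) (p : 'rV[k]_n -> M),
    [/\ is_linear i, is_linear p & forall m, p (i m) = m].

Definition is_bialgebra (H : algType k) (D : H -> tens H H) (e : H -> k) :=
  [/\ tlinear D /\ is_klinear e,
      forall h, teq3 (tmap_l D (D h)) (tmap_r D (D h)),
      (forall h, tapp (fun x y => e x *: y) (D h) = h /\
                 tapp (fun x y => e y *: x) (D h) = h),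
      teq (D 1) [:: (1, 1)] /\ (forall x y, teq (D (x * y)) (tmul (D x) (D y))) &
      e 1 = 1 /\ (forall x y, e (x * y) = e x * e y)].

Definition is_antipode (H : algType k) (D : H -> tens H H) (e : H -> k)
  (S : H -> H) :=
  [/\ is_linear S,
      forall h, tapp (fun x y => S x * y) (D h) = eta H (e h) &
      forall h, tapp (fun x y => x * S y) (D h) = eta H (e h)].

Definition is_hopf_algebra (H : algType k) (D : H -> tens H H) (e : H -> k)
  (S : H -> H) := is_bialgebra D e /\ is_antipode D e S.

Definition coupled (H : algType k) (D1 : H -> tens H H) (e1 : H -> k)
  (D2 : H -> tens H H) (e2 : H -> k) (C : H -> H) :=
  [/\ is_linear C,
      forall h, tapp (fun x y => C x * y) (D1 h) = eta H (e2 h),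
      forall h, tapp (fun x y => x * C y) (D2 h) = eta H (e1 h),
      forall h, teq3 (tmap_l D1 (D2 h)) (tmap_r D2 (D1 h)) &
      forall h, teq3 (tmap_l D2 (D1 h)) (tmap_r D1 (D2 h))].

(* Source and target maps are k-algebra maps k -> H, hence all equal to    *)
(* eta; then H (x)_R H = H (x)_k H and the Takeuchi product is H (x)_k H.   *)

Definition is_left_bialgebroid (H : algType k) (D : H -> tens H H) (e : H -> k) :=
  [/\ tlinear D /\ is_klinear e,
      forall h, teq3 (tmap_l D (D h)) (tmap_r D (D h)),
      (forall h, tapp (fun x y => e x *: y) (D h) = h /\
                 tapp (fun x y => e y *: x) (D h) = h),
      teq (D 1) [:: (1, 1)] /\ (forall x y, teq (D (x * y)) (tmul (D x) (D y))) &
      (* eps(1) = 1, eps(h h') = eps(h s(eps h')) = eps(h t(eps h')) *)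
      e 1 = 1 /\ (forall x y, e (x * y) = e (x * eta H (e y)))].

Definition is_right_bialgebroid (H : algType k) (D : H -> tens H H) (e : H -> k) :=
  [/\ tlinear D /\ is_klinear e,
      forall h, teq3 (tmap_l D (D h)) (tmap_r D (D h)),
      (forall h, tapp (fun x y => e x *: y) (D h) = h /\
                 tapp (fun x y => e y *: x) (D h) = h),
      teq (D 1) [:: (1, 1)] /\ (forall x y, teq (D (x * y)) (tmul (D x) (D y))) &
      (* eps(1) = 1, eps(h h') = eps(s(eps h) h') = eps(t(eps h) h') *)
      e 1 = 1 /\ (forall x y, e (x * y) = e (eta H (e x) * y))].

Definition is_hopf_algebroid (H : algType k) (DL : H -> tens H H) (eL : H -> k)
  (DR : H -> tens H H) (eR : H -> k) (S : H -> H) :=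
  [/\ is_left_bialgebroid DL eL /\ is_right_bialgebroid DR eR,
      (* compatibility of sources, targets and counits (all s, t = eta) *)
      forall r, eta H (eL (eta H r)) = eta H r /\ eta H (eR (eta H r)) = eta H r,
      (forall h, teq3 (tmap_l DL (DR h)) (tmap_r DR (DL h))) /\
      (forall h, teq3 (tmap_l DR (DL h)) (tmap_r DL (DR h))),
      (* S is a bijective k-module map with S(t_L(l) h t_R(r)) = s_R(r) S(h) s_L(l) *)
      [/\ is_linear S, bijective S &
          forall l r h, S (eta H l * h * eta H r) = eta H r * S h * eta H l] &
      (forall h, tapp (fun x y => S x * y) (DL h) = eta H (eR h)) /\
      (forall h, tapp (fun x y => x * S y) (DR h) = eta H (eL h))].

Definition is_comodule_algebra (H B : algType k) (D : H -> tens H H) (e : H -> k)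
  (rho : B -> tens B H) :=
  [/\ tlinear rho,
      forall b, teq3 (tmap_l rho (rho b)) (tmap_r D (rho b)),
      forall b, tapp (fun c h => e h *: c) (rho b) = b,
      teq (rho 1) [:: (1, 1)] &
      forall b c, teq (rho (b * c)) (tmul (rho b) (rho c))].

Definition is_H_comodule_algebra (H B : algType k) (DL : H -> tens H H)
  (eL : H -> k) (DR : H -> tens H H) (eR : H -> k)
  (rhoL rhoR : B -> tens B H) :=
  [/\ is_comodule_algebra DL eL rhoL, is_comodule_algebra DR eR rhoR,
      forall b, teq3 (tmap_l rhoR (rhoL b)) (tmap_r DL (rhoR b)) &
      forall b, teq3 (tmap_l rhoL (rhoR b)) (tmap_r DR (rhoL b))].

Definition coinvariant (H B : algType k) (rhoR : B -> tens B H) (b : B) :=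
  teq (rhoR b) [:: (b, 1)].

(* Galois map  B (x)_k B -> B (x)_k H, a (x) b |-> a b^[0] (x) b^[1] *)
Definition galois_map (H B : algType k) (rhoR : B -> tens B H) (t : tens B B)
  : tens B H := flatten [seq [seq (p.1 * q.1, q.2) | q <- rhoR p.2] | p <- t].

(* k (= image of eta) subset B is a right H-Galois extension *)
Definition is_galois_over_k (H B : algType k) (DL : H -> tens H H)
  (eL : H -> k) (DR : H -> tens H H) (eR : H -> k)
  (rhoL rhoR : B -> tens B H) :=
  [/\ is_H_comodule_algebra DL eL DR eR rhoL rhoR,
      injective (eta B) /\
      (forall b, coinvariant rhoR b <-> exists r, b = eta B r),
      (forall t u, teq (galois_map rhoR t) (galois_map rhoR u) -> teq t u) &
      (forall v, exists t, teq (galois_map rhoR t) v)].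

End Algebraic.

(* Main.v *)
Require Import Defs.
From HB Require Import structures.
From mathcomp Require Import all_boot all_order all_algebra.
Local Open Scope ring_scope.
Import GRing.Theory.

Section Helpers.
Context {k : comPzRingType}.

Lemma kl0 {M : lmodType k} {e : M -> k} : is_klinear e -> e 0 = 0.
Proof.
move=> He; have := He 1 0 0; rewrite scale1r addr0 mul1r => h.
by apply: (@addrI _ (e 0)); rewrite -h addr0.
Qed.

Lemma klD {M : lmodType k} {e : M -> k} {x y} : is_klinear e -> e (x + y) = e x + e y.
Proof. by move=> He; have := He 1 x y; rewrite scale1r mul1r. Qed.

Lemma klZ {M : lmodType k} {e : M -> k} {a x} : is_klinear e -> e (a *: x) = a * e x.
Proof. by move=> He; have := He a x 0; rewrite addr0 (kl0 He) addr0. Qed.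

Lemma klsum {M : lmodType k} {e : M -> k} {I} {s : seq I} {F : I -> M} :
  is_klinear e -> e (\sum_(i <- s) F i) = \sum_(i <- s) e (F i).
Proof.
move=> He; elim: s => [|a s IH]; first by rewrite !big_nil (kl0 He).
by rewrite !big_cons (klD He) IH.
Qed.

Lemma l0 {M N : lmodType k} {f : M -> N} : is_linear f -> f 0 = 0.
Proof.
move=> He; have := He 1 0 0; rewrite scale1r addr0 scale1r => h.
by apply: (@addrI _ (f 0)); rewrite -h addr0.
Qed.

Lemma lD {M N : lmodType k} {f : M -> N} {x y} : is_linear f -> f (x + y) = f x + f y.
Proof. by move=> He; have := He 1 x y; rewrite !scale1r. Qed.

Lemma lZ {M N : lmodType k} {f : M -> N} {a x} : is_linear f -> f (a *: x) = a *: f x.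
Proof. by move=> He; have := He a x 0; rewrite addr0 (l0 He) addr0. Qed.

Lemma tapp3_l (M N M1 M2 Q : lmodType k) (D : M -> tens M1 M2) (t : tens M N)
  (f : M1 -> M2 -> N -> Q) :
  tapp3 f (tmap_l D t) = \sum_(p <- t) \sum_(q <- D p.1) f q.1 q.2 p.2.
Proof.
rewrite /tapp3 /tmap_l big_flatten big_map; apply: eq_bigr => p _.
by rewrite big_map.
Qed.

Lemma tapp3_r (M N N1 N2 Q : lmodType k) (D : N -> tens N1 N2) (t : tens M N)
  (f : M -> N1 -> N2 -> Q) :
  tapp3 f (tmap_r D t) = \sum_(p <- t) \sum_(q <- D p.2) f p.1 q.1 q.2.
Proof.
rewrite /tapp3 /tmap_r big_flatten big_map; apply: eq_bigr => p _.
by rewrite big_map.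
Qed.

Lemma tapp_cat (M N Q : lmodType k) (f : M -> N -> Q) t u :
  tapp f (t ++ u) = tapp f t + tapp f u.
Proof. by rewrite /tapp big_cat. Qed.

Lemma tapp_scale (M N Q : lmodType k) (f : M -> N -> Q) a t :
  bilinear_map f -> tapp f (tscale a t) = a *: tapp f t.
Proof.
move=> [f1 f2]; rewrite /tapp /tscale big_map scaler_sumr; apply: eq_bigr => p _.
by rewrite (lZ (f1 p.2)).
Qed.

Lemma tlin_app (M N P Q : lmodType k) (d : M -> tens N P) (f : N -> P -> Q) :
  tlinear d -> bilinear_map f -> is_linear (fun h => tapp f (d h)).
Proof.
move=> Hd Hf a x y; rewrite (Hd a x y _ f Hf) tapp_cat tapp_scale //.
Qed.

End Helpers.

Theorem proposition6 (k : comPzRingType) (H B : algType k)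
  (DL : H -> tens H H) (eL : H -> k) (DR : H -> tens H H) (eR : H -> k)
  (S : H -> H) (rhoL rhoR : B -> tens B H) :
  is_hopf_algebroid DL eL DR eR S ->
  fg_projective H ->
  is_galois_over_k DL eL DR eR rhoL rhoR ->
  fg_projective B ->
  exists SL SR : H -> H,
    [/\ is_hopf_algebra DL eL SL, is_hopf_algebra DR eR SR &
        coupled DL eL DR eR S].
Proof.
move=> [[HL HR] _ [cLR cRL] [Slin _ _] [SantL SantR]] _ _ _.
case: HL => [[DLlin eLlin] coaL cuL algL [eL1 eLm]].
case: HR => [[DRlin eRlin] coaR cuR algR [eR1 eRm]].
exists (fun h => tapp (fun x y => eL x *: S y) (DR h)),
       (fun h => tapp (fun x y => eR y *: S x) (DL h)).
split.
- split.
  + split => //; split => // x y.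
    by rewrite eLm /Defs.eta -scalerAr mulr1 (klZ eLlin) mulrC.
  + split.
    * apply: tlin_app => //; split => [n|m] a x y.
      - by rewrite (klD eLlin) (klZ eLlin) scalerDl scalerA.
      - by rewrite (lD Slin) (lZ Slin) scalerDr !scalerA mulrC.
    * move=> h.
      have -> : tapp (fun x y => tapp (fun x0 y0 => eL x0 *: S y0) (DR x) * y) (DL h)
        = tapp3 (fun a b c => eL a *: (S b * c)) (tmap_l DR (DL h)).
        rewrite tapp3_l /tapp; apply: eq_bigr => p _.
        by rewrite mulr_suml; apply: eq_bigr => q _; rewrite -scalerAl.
      rewrite (cRL h); last first.
        split => [n p|m p|m n] a x y.
        - by rewrite (klD eLlin) (klZ eLlin) scalerDl scalerA.
        - by rewrite (lD Slin) (lZ Slin) mulrDl -scalerAl scalerDr !scalerA mulrC.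
        - by rewrite mulrDr -scalerAr scalerDr !scalerA mulrC.
      rewrite tapp3_r.
      have -> : \sum_(p <- DR h) \sum_(q <- DL p.2) eL p.1 *: (S q.1 * q.2)
         = \sum_(p <- DR h) (eL p.1 * eR p.2) *: (1 : H).
        apply: eq_bigr => p _; rewrite -scaler_sumr.
        by have := SantL p.2; rewrite /tapp /Defs.eta => ->; rewrite scalerA.
      rewrite -scaler_suml /Defs.eta; congr (_ *: _).
      have [_ cu2] := cuR h.
      by rewrite -{2}cu2 /tapp (klsum eLlin); apply: eq_bigr => p _; rewrite (klZ eLlin) mulrC.
    * move=> h.
      have -> : tapp (fun x y => x * tapp (fun x0 y0 => eL x0 *: S y0) (DR y)) (DL h)
        = tapp3 (fun a b c => eL b *: (a * S c)) (tmap_r DR (DL h)).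
        rewrite tapp3_r /tapp; apply: eq_bigr => p _.
        by rewrite mulr_sumr; apply: eq_bigr => q _; rewrite -scalerAr.
      rewrite -(cLR h); last first.
        split => [n p|m p|m n] a x y.
        - by rewrite mulrDl -scalerAl scalerDr !scalerA mulrC.
        - by rewrite (klD eLlin) (klZ eLlin) scalerDl scalerA.
        - by rewrite (lD Slin) (lZ Slin) mulrDr -scalerAr scalerDr !scalerA mulrC.
      rewrite tapp3_l -(SantR h) /tapp; apply: eq_bigr => p _.
      have [_ cu2] := cuL p.1.
      rewrite -[in RHS]cu2 /tapp mulr_suml; apply: eq_bigr => q _.
      by rewrite scalerAl.
- split.
  + split => //; split => // x y.
    by rewrite eRm /Defs.eta -scalerAl mul1r (klZ eRlin).
  + split.
    * apply: tlin_app => //; split => [n|m] a x y.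
      - by rewrite (lD Slin) (lZ Slin) scalerDr !scalerA mulrC.
      - by rewrite (klD eRlin) (klZ eRlin) scalerDl scalerA.
    * move=> h.
      have -> : tapp (fun x y => tapp (fun x0 y0 => eR y0 *: S x0) (DL x) * y) (DR h)
        = tapp3 (fun a b c => eR b *: (S a * c)) (tmap_l DL (DR h)).
        rewrite tapp3_l /tapp; apply: eq_bigr => p _.
        by rewrite mulr_suml; apply: eq_bigr => q _; rewrite -scalerAl.
      rewrite (cLR h); last first.
        split => [n p|m p|m n] a x y.
        - by rewrite (lD Slin) (lZ Slin) mulrDl -scalerAl scalerDr !scalerA mulrC.
        - by rewrite (klD eRlin) (klZ eRlin) scalerDl scalerA.
        - by rewrite mulrDr -scalerAr scalerDr !scalerA mulrC.
      rewrite tapp3_r -(SantL h) /tapp; apply: eq_bigr => p _.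
      have [cu1 _] := cuR p.2.
      rewrite -[in RHS]cu1 /tapp mulr_sumr; apply: eq_bigr => q _.
      by rewrite scalerAr.
    * move=> h.
      have -> : tapp (fun x y => x * tapp (fun x0 y0 => eR y0 *: S x0) (DL y)) (DR h)
        = tapp3 (fun a b c => eR c *: (a * S b)) (tmap_r DL (DR h)).
        rewrite tapp3_r /tapp; apply: eq_bigr => p _.
        by rewrite mulr_sumr; apply: eq_bigr => q _; rewrite -scalerAr.
      rewrite -(cRL h); last first.
        split => [n p|m p|m n] a x y.
        - by rewrite mulrDl -scalerAl scalerDr !scalerA mulrC.
        - by rewrite (lD Slin) (lZ Slin) mulrDr -scalerAr scalerDr !scalerA mulrC.
        - by rewrite (klD eRlin) (klZ eRlin) scalerDl scalerA.
      rewrite tapp3_l.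
      have -> : \sum_(p <- DL h) \sum_(q <- DR p.1) eR p.2 *: (q.1 * S q.2)
         = \sum_(p <- DL h) (eR p.2 * eL p.1) *: (1 : H).
        apply: eq_bigr => p _; rewrite -scaler_sumr.
        by have := SantR p.1; rewrite /tapp /Defs.eta => ->; rewrite scalerA.
      rewrite -scaler_suml /Defs.eta; congr (_ *: _).
      have [cu1 _] := cuL h.
      by rewrite -{2}cu1 /tapp (klsum eRlin); apply: eq_bigr => p _; rewrite (klZ eRlin) mulrC.
- split => //.
Qed.
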